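(* Let $M,N,K\ge 1$ be integers, $\mathcal K=\{1,\dots,K\}$, $\mathbf G\in\mathbb C^{N\times M}$, $\mathbf h_1,\dots,\mathbf h_K\in\mathbb C^{M}$, $P_0>0$, and for each $k\in\mathcal K$ let $\Gamma_k>0$ and $\sigma_k^2>0$. Write $\mathbf H_k=\mathbf h_k\mathbf h_k^H$. For a positive semidefinite $\mathbf R\in\mathbb C^{M\times M}$ let $f(\mathbf R)=\mathrm{tr}\big((\mathbf G\mathbf R\mathbf G^H)^{-1}\big)$ when $\mathbf G\mathbf R\mathbf G^H$ is invertible, and $f(\mathbf R)=+\infty$ otherwise. Consider the problems: (P2.1): minimize $f\big(\sum_{k\in\mathcal K}\mathbf w_k\mathbf w_k^H+\mathbf R_0\big)$ over $\mathbf w_1,\dots,\mathbf w_K\in\mathbb C^M$ and Hermitian $\mathbf R_0\in\mathbb C^{M\times M}$, subject to $\frac{|\mathbf h_k^H\mathbf w_k|^2}{\sum_{i\in\mathcal K,i\ne k}|\mathbf h_k^H\mathbf w_i|^2+\sigma_k^2}\ge\Gamma_k$ for all $k\in\mathcal K$, $\sum_{k\in\mathcal K}\|\mathbf w_k\|^2+\mathrm{tr}(\mathbf R_0)\le P_0$, and $\mathbf R_0\succeq\mathbf 0$; (SDR2.1): minimize $f\big(\sum_{k\in\mathcal K}\mathbf W_k+\mathbf R_0\big)$ over Hermitian $\mathbf W_1,\dots,\mathbf W_K,\mathbf R_0\in\mathbb C^{M\times M}$, subject to $\frac{1}{\Gamma_k}\mathrm{tr}(\mathbf H_k\mathbf W_k)-\sum_{i\in\mathcal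 K,i\ne k}\mathrm{tr}(\mathbf H_k\mathbf W_i)\ge\sigma_k^2$ for all $k\in\mathcal K$, $\sum_{k\in\mathcal K}\mathrm{tr}(\mathbf W_k)+\mathrm{tr}(\mathbf R_0)\le P_0$, $\mathbf R_0\succeq\mathbf 0$, and $\mathbf W_k\succeq\mathbf 0$ for all $k\in\mathcal K$. Then (P2.1) and (SDR2.1) have the same optimal value. Moreover, if $\{\bar{\mathbf W}_k\}_{k\in\mathcal K},\bar{\mathbf R}_0$ is an optimal solution of (SDR2.1), then $\mathbf w_k^{\star\star}=(\mathbf h_k^H\bar{\mathbf W}_k\mathbf h_k)^{-1/2}\bar{\mathbf W}_k\mathbf h_k$ for $k\in\mathcal K$ and $\mathbf R_0^{\star\star}=\bar{\mathbf R}_0+\sum_{k\in\mathcal K}\bar{\mathbf W}_k-\sum_{k\in\mathcal K}\mathbf w_k^{\star\star}(\mathbf w_k^{\star\star})^H$ form an optimal solution of (P2.1).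
   Context: This is the transmit beamforming subproblem of an IRS-enabled integrated sensing and communication system with a fixed IRS reflection vector, for users able to pre-cancel the sensing-signal interference: $\mathbf h_k$ is the combined channel from the base station to user $k$, $\mathbf w_k$ the information beamformer, $\mathbf R_0$ the sensing-signal covariance, $\mathbf G$ the base-station-to-IRS channel, $\Gamma_k$ the SINR threshold, $\sigma_k^2$ the noise variance, $P_0$ the power budget. The objective is (up to a positive constant) the Cramér-Rao bound for estimating the target response matrix. *)

(* Defs.v *)
From HB Require Import structures.
From mathcomp Require Import all_boot all_order all_algebra.
From mathcomp Require Import complex.
From mathcomp Require Import classical_sets reals constructive_ereal ereal.
Set Implicit Arguments. Unset Strict Implicit. Unset Printing Implicit Defensive.
Import Order.TTheory GRing.Theory Num.Theory.
Local Open Scope ring_scope.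
Local Open Scope classical_set_scope.
Local Open Scope complex_scope.

Section Defs.
Variable R : realType.
Local Notation C := R[i].

Definition adj (m n : nat) (A : 'M[C]_(m, n)) : 'M[C]_(n, m) :=
  (map_mx (@conjc R) A)^T.

Definition hermitian (n : nat) (A : 'M[C]_n) : Prop := adj A = A.

(* positive semidefinite: Hermitian with nonnegative quadratic form
   (the order on C: 0 <= z iff z is a nonnegative real) *)
Definition psd (n : nat) (A : 'M[C]_n) : Prop :=
  hermitian A /\ forall x : 'cV[C]_n, 0 <= (adj x *m A *m x) 0 0.

Definition cdot (n : nat) (u v : 'cV[C]_n) : C := (adj u *m v) 0 0.

Definition vnorm2 (n : nat) (w : 'cV[C]_n) : C := \sum_i `|w i 0| ^+ 2.

Definition crb (N M : nat) (G : 'M[C]_(N, M)) (Rm : 'M[C]_M) : \bar R :=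
  let A := G *m Rm *m adj G in
  if A \in unitmx then (complex.Re (\tr (invmx A)))%:E else +oo%E.

Variables (M N K : nat) (G : 'M[C]_(N, M)) (h : 'I_K -> 'cV[C]_M)
  (P0 : R) (Gam s2 : 'I_K -> R).

Definition obj_P21 (p : ('I_K -> 'cV[C]_M) * 'M[C]_M) : \bar R :=
  crb G (\sum_(k < K) p.1 k *m adj (p.1 k) + p.2).

Definition feas_P21 (p : ('I_K -> 'cV[C]_M) * 'M[C]_M) : Prop :=
  let w := p.1 in let R0 := p.2 in
  [/\ hermitian R0,
      (forall k : 'I_K,
        `|cdot (h k) (w k)| ^+ 2
          / (\sum_(i < K | i != k) `|cdot (h k) (w i)| ^+ 2 + (s2 k)%:C)
        >= (Gam k)%:C),
      \sum_(k < K) vnorm2 (w k) + \tr R0 <= P0%:C &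
      psd R0].

Definition val_P21 : \bar R := ereal_inf [set obj_P21 p | p in feas_P21].

Definition opt_P21 (p : ('I_K -> 'cV[C]_M) * 'M[C]_M) : Prop :=
  feas_P21 p /\ forall q, feas_P21 q -> (obj_P21 p <= obj_P21 q)%E.

Definition Hk (k : 'I_K) : 'M[C]_M := h k *m adj (h k).

Definition obj_SDR (q : ('I_K -> 'M[C]_M) * 'M[C]_M) : \bar R :=
  crb G (\sum_(k < K) q.1 k + q.2).

Definition feas_SDR (q : ('I_K -> 'M[C]_M) * 'M[C]_M) : Prop :=
  let W := q.1 in let R0 := q.2 in
  [/\ hermitian R0 /\ (forall k, hermitian (W k)),
      (forall k : 'I_K,
        ((Gam k)%:C)^-1 * \tr (Hk k *m W k)
          - \sum_(i < K | i != k) \tr (Hk k *m W i) >= (s2 k)%:C),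
      \sum_(k < K) \tr (W k) + \tr R0 <= P0%:C,
      psd R0 & forall k, psd (W k)].

Definition val_SDR : \bar R := ereal_inf [set obj_SDR q | q in feas_SDR].

Definition opt_SDR (q : ('I_K -> 'M[C]_M) * 'M[C]_M) : Prop :=
  feas_SDR q /\ forall q', feas_SDR q' -> (obj_SDR q <= obj_SDR q')%E.

Definition w_ss (W : 'I_K -> 'M[C]_M) (k : 'I_K) : 'cV[C]_M :=
  (sqrtc (cdot (h k) (W k *m h k)))^-1 *: (W k *m h k).

Definition R0_ss (W : 'I_K -> 'M[C]_M) (R0 : 'M[C]_M) : 'M[C]_M :=
  R0 + \sum_(k < K) W k - \sum_(k < K) w_ss W k *m adj (w_ss W k).

End Defs.

(* Main.v *)
From Pilot Require Import Defs.
From HB Require Import structures.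
From mathcomp Require Import all_boot all_order all_algebra.
From mathcomp Require Import complex.
From mathcomp Require Import ring.
From mathcomp Require Import classical_sets reals constructive_ereal ereal.
Import Order.TTheory GRing.Theory Num.Theory.
Import Pilot.Defs.
Set Implicit Arguments. Unset Strict Implicit. Unset Printing Implicit Defensive.
Local Open Scope ring_scope.
Local Open Scope complex_scope.

Section Aux.
Variable R : realType.
Local Notation C := R[i].
Local Notation cj := (@complex.conjc R).

Lemma adjE m n (A : 'M[C]_(m, n)) i j : adj A i j = cj (A j i).
Proof. by rewrite /adj !mxE. Qed.

Lemma adjK m n (A : 'M[C]_(m, n)) : adj (adj A) = A.
Proof. by apply/matrixP=> i j; rewrite !adjE conjcK. Qed.

Lemma adjD m n (A B : 'M[C]_(m, n)) : adj (A + B) = adj A + adj B.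
Proof. by apply/matrixP=> i j; rewrite !(adjE, mxE) rmorphD. Qed.

Lemma adjN m n (A : 'M[C]_(m, n)) : adj (- A) = - adj A.
Proof. by apply/matrixP=> i j; rewrite !(adjE, mxE) rmorphN. Qed.

Lemma adjB m n (A B : 'M[C]_(m, n)) : adj (A - B) = adj A - adj B.
Proof. by rewrite adjD adjN. Qed.

Lemma adjZ m n (a : C) (A : 'M[C]_(m, n)) : adj (a *: A) = cj a *: adj A.
Proof. by apply/matrixP=> i j; rewrite !(adjE, mxE) rmorphM. Qed.

Lemma adjM m n p (A : 'M[C]_(m, n)) (B : 'M[C]_(n, p)) :
  adj (A *m B) = adj B *m adj A.
Proof.
apply/matrixP=> i j; rewrite adjE !mxE rmorph_sum; apply: eq_bigr => k _.
by rewrite !adjE rmorphM mulrC.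
Qed.

Lemma adj0 m n : adj (0 : 'M[C]_(m, n)) = 0.
Proof. by apply/matrixP=> i j; rewrite !(adjE, mxE) conjc0. Qed.

Lemma adj_sum m n (I : finType) (F : I -> 'M[C]_(m, n)) :
  adj (\sum_i F i) = \sum_i adj (F i).
Proof.
apply/matrixP=> i j; rewrite adjE !summxE rmorph_sum.
by apply: eq_bigr => k _; rewrite adjE.
Qed.

Lemma conjc_ge0 (x : C) : 0 <= x -> cj x = x.
Proof. by move=> /ger0_real/RRe_real <-; rewrite conjc_real. Qed.

Definition qf n (W : 'M[C]_n) (x y : 'cV[C]_n) : C := (adj x *m W *m y) 0 0.

Lemma mx11M (A B : 'M[C]_1) : (A *m B) 0 0 = A 0 0 * B 0 0.
Proof. by rewrite !mxE big_ord1. Qed.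

Lemma qf_herm n (W : 'M[C]_n) x y : hermitian W -> qf W y x = cj (qf W x y).
Proof.
move=> hW; rewrite /qf -adjE !adjM adjK hW mulmxA //.
Qed.

Lemma qfDr n (W : 'M[C]_n) x y z : qf W x (y + z) = qf W x y + qf W x z.
Proof. by rewrite /qf mulmxDr mxE. Qed.
Lemma qfNr n (W : 'M[C]_n) x y : qf W x (- y) = - qf W x y.
Proof. by rewrite /qf mulmxN mxE. Qed.
Lemma qfZr n (W : 'M[C]_n) x a y : qf W x (a *: y) = a * qf W x y.
Proof. by rewrite /qf -scalemxAr mxE. Qed.
Lemma qfDl n (W : 'M[C]_n) x y z : qf W (x + y) z = qf W x z + qf W y z.
Proof. by rewrite /qf adjD !mulmxDl mxE. Qed.
Lemma qfNl n (W : 'M[C]_n) x y : qf W (- x) y = - qf W x y.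
Proof. by rewrite /qf adjN !mulNmx mxE. Qed.
Lemma qfZl n (W : 'M[C]_n) x a y : qf W (a *: x) y = cj a * qf W x y.
Proof. by rewrite /qf adjZ -!scalemxAl mxE. Qed.

Lemma qf_psd n (W : 'M[C]_n) x : psd W -> 0 <= qf W x x.
Proof. by case=> _ /(_ x). Qed.

Lemma sqr_norm (x : C) : `|x| ^+ 2 = x * cj x.
Proof. exact: sqr_normc. Qed.

Lemma cs n (W : 'M[C]_n) x y : psd W -> 0 < qf W y y ->
  `|qf W x y| ^+ 2 / qf W y y <= qf W x x.
Proof.
move=> pW cpos; set c := qf W y y; set b := qf W x y; set a := qf W x x.
have hW : hermitian W by case: pW.
have cc : cj c = c by apply: conjc_ge0; apply: ltW.
have c0 : c != 0 by rewrite gt_eqF.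
set t := cj b / c.
have := qf_psd (x - t *: y) pW.
rewrite qfDl qfNl !qfDr !qfNr !qfZr !qfZl -/a -/b -/c (qf_herm _ _ hW) -/b.
rewrite /t rmorphM /= conjcK conjc_inv cc sqr_norm.
suff -> : a - cj b / c * b - (b / c * cj b - cj b / c * (b / c * c))
   = a - b * cj b / c by rewrite subr_ge0.
by field.
Qed.


Lemma cdot_qf n (W : 'M[C]_n) x y : cdot x (W *m y) = qf W x y.
Proof. by rewrite /cdot /qf mulmxA. Qed.

Lemma cdotZ n (x u : 'cV[C]_n) a : cdot x (a *: u) = a * cdot x u.
Proof. by rewrite /cdot -scalemxAr mxE. Qed.

Lemma norm_sqrtc (c : C) : 0 <= c -> `|sqrtc c| ^+ 2 = c.
Proof. by move=> c0; rewrite -normrX sqr_sqrtc ger0_norm. Qed.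

Lemma adj11 (A : 'M[C]_1) : adj A 0 0 = cj (A 0 0).
Proof. by rewrite adjE. Qed.

Lemma qf_rank1 n (u x : 'cV[C]_n) : qf (u *m adj u) x x = `|cdot x u| ^+ 2.
Proof.
rewrite /qf mulmxA -(mulmxA (adj x *m u)) mx11M sqr_norm /cdot.
by rewrite -adj11 adjM adjK.
Qed.

Lemma psd_rank1 n (u : 'cV[C]_n) : psd (u *m adj u).
Proof.
rewrite /psd; split; first by rewrite /hermitian adjM adjK.
by move=> x; rewrite -/(qf _ x x) qf_rank1 exprn_ge0.
Qed.

Lemma qfBm n (A B : 'M[C]_n) x y : qf (A - B) x y = qf A x y - qf B x y.
Proof. by rewrite /qf mulmxBr mulmxBl !mxE. Qed.

Lemma qfDm n (A B : 'M[C]_n) x y : qf (A + B) x y = qf A x y + qf B x y.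
Proof. by rewrite /qf mulmxDr mulmxDl mxE. Qed.

Definition r1 n (W : 'M[C]_n) (y : 'cV[C]_n) : 'cV[C]_n :=
  (sqrtc (cdot y (W *m y)))^-1 *: (W *m y).

Lemma cdot_r1 n (W : 'M[C]_n) x y : 0 <= qf W y y ->
  `|cdot x (r1 W y)| ^+ 2 = `|qf W x y| ^+ 2 / qf W y y.
Proof.
move=> c0; rewrite /r1 cdotZ !cdot_qf normrM exprMn normfV.
by rewrite exprVn norm_sqrtc // mulrC.
Qed.


Lemma psd_sub_r1 n (W : 'M[C]_n) y : psd W -> 0 < qf W y y ->
  psd (W - r1 W y *m adj (r1 W y)).
Proof.
move=> pW cpos; have hW : hermitian W by case: pW.
rewrite /psd; split; first by rewrite /hermitian adjB adjM adjK hW.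
move=> x; rewrite -/(qf _ x x) qfBm qf_rank1 cdot_r1; last exact: ltW.
rewrite subr_ge0.
exact: cs.
Qed.

Lemma psd0 n : psd (0 : 'M[C]_n).
Proof.
rewrite /psd /hermitian adj0; split => // x.
by rewrite mulmx0 mul0mx mxE.
Qed.

Lemma psdD n (A B : 'M[C]_n) : psd A -> psd B -> psd (A + B).
Proof.
move=> pA pB; have hA : hermitian A by case: pA.
have hB : hermitian B by case: pB.
rewrite /psd; split; first by rewrite /hermitian adjD hA hB.
move=> x; rewrite -/(qf _ x x) qfDm addr_ge0 //; exact: qf_psd.
Qed.

Lemma psd_sum n (I : finType) (F : I -> 'M[C]_n) :
  (forall i, psd (F i)) -> psd (\sum_i F i).
Proof.
move=> pF; elim/big_ind: _ => //; [exact: psd0 | exact: psdD].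
Qed.

Lemma tr1 (A : 'M[C]_1) : \tr A = A 0 0.
Proof. by rewrite /mxtrace big_ord1. Qed.

Lemma tr_rank1 n (u : 'cV[C]_n) (W : 'M[C]_n) :
  \tr (u *m adj u *m W) = qf W u u.
Proof. by rewrite -mulmxA mxtrace_mulC tr1. Qed.

Lemma vnorm2_tr n (w : 'cV[C]_n) : vnorm2 w = \tr (w *m adj w).
Proof.
rewrite mxtrace_mulC tr1 /vnorm2 mxE; apply: eq_bigr => j _.
by rewrite adjE sqr_norm mulrC.
Qed.


Lemma trN n (X : 'M[C]_n) : \tr (- X) = - \tr X.
Proof. by rewrite /mxtrace -sumrN; apply: eq_bigr => i _; rewrite mxE. Qed.

Lemma tr_sum n K (F : 'I_K -> 'M[C]_n) : \tr (\sum_i F i) = \sum_i \tr (F i).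
Proof.
rewrite /mxtrace exchange_big /=; apply: eq_bigr => i _; by rewrite summxE.
Qed.

Lemma tr_aux n K (A : 'M[C]_n) (F Gf : 'I_K -> 'M[C]_n) :
  \sum_i \tr (Gf i) + \tr (A + \sum_i F i - \sum_i Gf i) = \sum_i \tr (F i) + \tr A.
Proof.
rewrite !mxtraceD trN !tr_sum; ring.
Qed.

Lemma trHk M K (h : 'I_K -> 'cV[C]_M) k (W : 'M[C]_M) :
  \tr (Hk h k *m W) = qf W (h k) (h k).
Proof. by rewrite /Hk tr_rank1. Qed.

Lemma gtC0 (x : R) : 0 < x -> 0 < x%:C.
Proof. by rewrite ltcR. Qed.

Lemma sdr_to_p21 M N K (G : 'M[C]_(N, M)) (h : 'I_K -> 'cV[C]_M) P0
  (Gam s2 : 'I_K -> R) (W : 'I_K -> 'M[C]_M) (R0 : 'M[C]_M) :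
  (forall k, 0 < Gam k) -> (forall k, 0 < s2 k) ->
  feas_SDR h P0 Gam s2 (W, R0) ->
  feas_P21 h P0 Gam s2 (w_ss h W, R0_ss h W R0) /\
  obj_P21 G (w_ss h W, R0_ss h W R0) = obj_SDR G (W, R0).
Proof.
move=> Gp sp [/= [hR0 hW] hsinr hpow pR0 pW].
set T := fun k i => qf (W i) (h k) (h k).
have T0 k i : 0 <= T k i by exact: qf_psd.
have Tpos k : 0 < T k k.
  have := hsinr k; rewrite /= !trHk -/(T k k) => hk.
  have S0 : 0 <= \sum_(i < K | i != k) \tr (Hk h k *m W i).
    by apply: sumr_ge0 => i _; rewrite trHk; apply: qf_psd.
  have : 0 < (Gam k)%:C^-1 * T k k.
    rewrite -(subrK (\sum_(i < K | i != k) \tr (Hk h k *m W i)) ((Gam k)%:C^-1 * T k k)).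
    apply: lt_le_trans (lerD hk (lexx _)).
    by apply: (lt_le_trans (gtC0 (sp k))); rewrite lerDl.
  by rewrite pmulr_rgt0 // invr_gt0 gtC0.
have wE k : w_ss h W k = r1 (W k) (h k) by [].
split; last first.
  by rewrite /obj_P21 /obj_SDR /= /R0_ss addrC subrK addrC.
split => /=.
- rewrite /hermitian /R0_ss adjB adjD !adj_sum hR0; congr (_ + _ - _).
    by apply: eq_bigr => i _; rewrite hW.
  by apply: eq_bigr => i _; rewrite adjM adjK.
- move=> k; set D := (X in _ / X).
  have le_i i : `|cdot (h k) (w_ss h W i)| ^+ 2 <= T k i.
    rewrite wE cdot_r1; last exact: ltW (Tpos i).
    apply: cs; [exact: pW | exact: Tpos].
  have D0 : 0 < D.
    apply: (lt_le_trans (gtC0 (sp k))); rewrite /D lerDr.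
    by apply: sumr_ge0 => i _; exact: exprn_ge0.
  rewrite ler_pdivlMr // wE cdot_r1; last exact: ltW (Tpos k).
  rewrite -/(T k k) ger0_norm ?T0 // expr2 mulfK ?gt_eqF //.
  have hk := hsinr k.
  have eS : \sum_(i < K | i != k) \tr (Hk h k *m W i) = \sum_(i < K | i != k) T k i.
    by apply: eq_bigr => i _; exact: trHk.
  rewrite eS trHk -/(T k k) lerBrDr in hk.
  apply: (le_trans (y := (Gam k)%:C * (\sum_(i < K | i != k) T k i + (s2 k)%:C))).
    apply: ler_wpM2l; first exact: ltW (gtC0 (Gp k)).
    by rewrite lerD2r; apply: ler_sum => i _; exact: le_i.
  have := ler_wpM2l (ltW (gtC0 (Gp k))) hk.
  by rewrite mulrA mulfV ?gt_eqF ?gtC0 // mul1r addrC.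
- apply: le_trans hpow; rewrite le_eqVlt; apply/orP; left; apply/eqP.
  under eq_bigr do rewrite vnorm2_tr.
  exact: tr_aux.
- rewrite /R0_ss -addrA -sumrB; apply: psdD => //.
  apply: psd_sum => i; exact: psd_sub_r1 (pW i) (Tpos i).
Qed.


Lemma p21_to_sdr M N K (G : 'M[C]_(N, M)) (h : 'I_K -> 'cV[C]_M) P0
  (Gam s2 : 'I_K -> R) (w : 'I_K -> 'cV[C]_M) (R0 : 'M[C]_M) :
  (forall k, 0 < Gam k) -> (forall k, 0 < s2 k) ->
  feas_P21 h P0 Gam s2 (w, R0) ->
  feas_SDR h P0 Gam s2 (fun k => w k *m adj (w k), R0) /\
  obj_SDR G (fun k => w k *m adj (w k), R0) = obj_P21 G (w, R0).
Proof.
move=> Gp sp [/= hR0 hsinr hpow pR0]; split=> //.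
have trE k i : \tr (Hk h k *m (w i *m adj (w i))) = `|cdot (h k) (w i)| ^+ 2.
  by rewrite trHk qf_rank1.
split => /=.
- by split=> // k; case: (psd_rank1 (w k)).
- move=> k; have hk := hsinr k.
  set D := (X in _ / X) in hk.
  have D0 : 0 < D.
    apply: (lt_le_trans (gtC0 (sp k))); rewrite /D lerDr.
    by apply: sumr_ge0 => i _; exact: exprn_ge0.
  rewrite ler_pdivlMr // in hk.
  have eS : \sum_(i < K | i != k) \tr (Hk h k *m (w i *m adj (w i)))
        = \sum_(i < K | i != k) `|cdot (h k) (w i)| ^+ 2.
    by apply: eq_bigr => i _; exact: trE.
  rewrite eS trE lerBrDr.
  have g0 : 0 < (Gam k)%:C by exact: gtC0.
  rewrite -(ler_pM2l g0) mulrA mulfV ?gt_eqF // mul1r addrC; exact: hk.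
- apply: le_trans hpow; rewrite le_eqVlt; apply/orP; left; apply/eqP.
  by congr (_ + _); apply: eq_bigr => i _; rewrite vnorm2_tr.
- by [].
- by move=> k; exact: psd_rank1.
Qed.

End Aux.

Local Open Scope classical_set_scope.

Theorem proposition2 (R : realType) (M N K : nat)
    (G : 'M[R[i]]_(N, M)) (h : 'I_K -> 'cV[R[i]]_M)
    (P0 : R) (Gam s2 : 'I_K -> R) :
  (0 < M)%N -> (0 < N)%N -> (0 < K)%N ->
  0 < P0 -> (forall k, 0 < Gam k) -> (forall k, 0 < s2 k) ->
  val_P21 G h P0 Gam s2 = val_SDR G h P0 Gam s2 /\
  (forall (Wb : 'I_K -> 'M[R[i]]_M) (R0b : 'M[R[i]]_M),
     opt_SDR G h P0 Gam s2 (Wb, R0b) ->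
     opt_P21 G h P0 Gam s2 (w_ss h Wb, R0_ss h Wb R0b)).
Proof.
move=> _ _ _ _ Gp sp; split.
  rewrite /val_P21 /val_SDR; congr ereal_inf.
  apply/seteqP; split => z [p fp <-].
    case: p fp => w R0 fp.
    have [f e] := p21_to_sdr G Gp sp fp.
    by exists (fun k => w k *m adj (w k), R0).
  case: p fp => W R0 fp.
  have [f e] := sdr_to_p21 G Gp sp fp.
  by exists (w_ss h W, R0_ss h W R0).
move=> Wb R0b [fb ob].
have [f e] := sdr_to_p21 G Gp sp fb.
split => // [[w R0]] fq.
have [f' e'] := p21_to_sdr G Gp sp fq.
by rewrite e -e'; apply: ob.
Qed.
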